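(* Let $n>1$ and $0 < t \leq n$. Let $R$ be a randomized $t$-query algorithm on $n$ input bits, and suppose $K \subseteq \{0,1\}^n$ is a set with $|K| > 2^{n-1}$ such that $\Pr[R(y) = \mathrm{PAR}(y)] \geq 2/3$ for every $y \in K$, where $\mathrm{PAR}(y)=y_1\oplus\cdots\oplus y_n$. Then there exists a Bob-strategy such that, if $(\pi,z)$ is drawn uniformly from $S_n\times\{0,1\}$ and $\mathbf{b} = b(\pi,z)$ is the resulting clue string, then \[ \Pr_{\pi,z,R}\big[\text{the execution of } R \text{ on } \mathbf{b} \text{ is search-successful}\big] \geq 1/3 . \]
   Context: A randomized $t$-query algorithm is a probability distribution over deterministic decision trees of depth $t$ on input variables $b_1,\dots,b_n$, each outputting a bit. Let $S_n$ be the set of permutations $\pi=(\pi(1),\dots,\pi(n))$ of $[n]$. A Bob-strategy is a family of functions $F_t : S_n \to \{0,1\}$, $t=1,\dots,n-1$, where each $F_t(\pi)$ depends only on $\pi(1),\dots,\pi(t)$. For a fixed Bob-strategy, $\pi\in S_n$ and $z\in\{0,1\}$, define $b(\pi,z)\in\{0,1\}^n$ by $b_j = F_t(\pi)$ if $j=\pi(t)$ for some $t<n$, and $b_j=z$ if $j=\pi(n)$. An execution of the randomized algorithm $R$ on $\mathbf{b}=b(\pi,z)$ is search-successful if the set of coordinates queried by $R$ in that execution contains $\pi(n)$. *)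

(* Defs.v *)
From HB Require Import structures.
From mathcomp Require Import all_boot all_order all_algebra all_fingroup.
Set Implicit Arguments. Unset Strict Implicit. Unset Printing Implicit Defensive.
Import Order.TTheory GRing.Theory Num.Theory.
Local Open Scope ring_scope.

(* Input variables b_1..b_n are indexed by 'I_n (0-based). *)

Inductive dtree (n : nat) : Type :=
| Leaf of bool
| Node of 'I_n & dtree n & dtree n.

Arguments Leaf {n}.

Fixpoint depth n (T : dtree n) : nat :=
  match T with
  | Leaf _ => 0
  | Node _ T0 T1 => (maxn (depth T0) (depth T1)).+1
  end.

Fixpoint eval n (T : dtree n) (b : {ffun 'I_n -> bool}) : bool :=
  match T with
  | Leaf o => o
  | Node i T0 T1 => if b i then eval T1 b else eval T0 b
  end.

Fixpoint queried n (T : dtree n) (b : {ffun 'I_n -> bool}) : seq 'I_n :=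
  match T with
  | Leaf _ => [::]
  | Node i T0 T1 => i :: queried (if b i then T1 else T0) b
  end.

(* A randomized t-query algorithm: a (finitely supported) probability
   distribution over decision trees of depth (at most) t, given as a list of
   (tree, weight) pairs. *)
Definition rand_alg (F : realFieldType) n (t : nat) (A : seq (dtree n * F)) : Prop :=
  [/\ all (fun p => depth p.1 <= t)%N A,
      all (fun p => 0 <= p.2) A &
      \sum_(p <- A) p.2 = 1].

Definition parity n (y : {ffun 'I_n -> bool}) : bool := \big[addb/false]_(i < n) y i.

Definition prob_correct (F : realFieldType) n (A : seq (dtree n * F))
  (y : {ffun 'I_n -> bool}) : F :=
  \sum_(p <- A) p.2 * (eval p.1 y == parity y)%:R.

(* Bob-strategy: F_t, t = 1..n-1, with F_t(pi) depending only on
   pi(1),...,pi(t); with 0-based positions these are pi 0, ..., pi (t-1). *)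
Definition bob_strategy n (Fb : nat -> {perm 'I_n} -> bool) : Prop :=
  forall (t : nat) (pi sigma : {perm 'I_n}),
    (1 <= t <= n.-1)%N ->
    (forall k : 'I_n, (val k < t)%N -> pi k = sigma k) ->
    Fb t pi = Fb t sigma.

(* b(pi,z): coordinate j = pi(t) (1-based position t = val k + 1) gets F_t(pi)
   if t < n, and z if t = n. *)
Definition clue n (Fb : nat -> {perm 'I_n} -> bool) (pi : {perm 'I_n}) (z : bool)
  : {ffun 'I_n -> bool} :=
  [ffun j => let k := (pi^-1)%g j in
             if (val k < n.-1)%N then Fb (val k).+1 pi else z].

(* the execution of tree T on b(pi,z) is search-successful:
   pi(n) (0-based position n-1) is among the queried coordinates. *)
Definition search_success n (T : dtree n) (pi : {perm 'I_n}) (b : {ffun 'I_n -> bool}) : bool :=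
  [exists k : 'I_n, (val k == n.-1) && (pi k \in queried T b)].

Definition prob_search (F : realFieldType) n (A : seq (dtree n * F))
  (Fb : nat -> {perm 'I_n} -> bool) : F :=
  (1 / (2 * (#|{perm 'I_n}|)%:R)) *
  \sum_(pi : {perm 'I_n}) \sum_(z : bool)
     \sum_(p <- A) p.2 * (search_success p.1 pi (clue Fb pi z))%:R.

(* Main.v *)
Require Import Defs.
From HB Require Import structures.
From mathcomp Require Import all_boot all_order all_algebra all_fingroup.
From mathcomp Require Import ring lra.
Import Order.TTheory GRing.Theory Num.Theory.
Local Open Scope ring_scope.
Set Implicit Arguments. Unset Strict Implicit. Unset Printing Implicit Defensive.

Definition bset m (j : 'I_m.+1) : {set {ffun 'I_m.+1 -> bool}} := [set y : {ffun 'I_m.+1 -> bool} | y j].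

Definition gbit m (K S : {set {ffun 'I_m.+1 -> bool}}) (j : 'I_m.+1) : bool :=
  (#|(K :&: S) :\: bset j| <= #|(K :&: S) :&: bset j|)%N.

Definition nextS m (K S : {set {ffun 'I_m.+1 -> bool}}) (j : 'I_m.+1) :=
  if gbit K S j then S :&: bset j else S :\: bset j.

Fixpoint Cs m (K : {set {ffun 'I_m.+1 -> bool}}) (pi : {perm 'I_m.+1}) (s : nat) :=
  match s with
  | 0 => setT
  | s'.+1 => nextS K (Cs K pi s') (pi (inord s'))
  end.

Definition Fbob m (K : {set {ffun 'I_m.+1 -> bool}}) : nat -> {perm 'I_m.+1} -> bool :=
  fun t pi => gbit K (Cs K pi t.-1) (pi (inord t.-1)).

Lemma Cs_dep m K (pi sigma : {perm 'I_m.+1}) s :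
  (s <= m.+1)%N -> (forall k : 'I_m.+1, (val k < s)%N -> pi k = sigma k) ->
  Cs K pi s = Cs K sigma s.
Proof.
elim: s => [//|s IH] hs H /=.
rewrite IH; last by move=> k hk; apply: H; apply: ltnW.
  by rewrite H // [val _]inordK.
exact: ltnW.
Qed.

Lemma mem_next m (K : {set {ffun 'I_m.+1 -> bool}}) S (j : 'I_m.+1) y :
  y \in nextS K S j -> y \in S /\ y j = gbit K S j.
Proof.
rewrite /nextS; case: (gbit K S j).
  by rewrite !inE => /andP[-> ->].
by rewrite !inE => /andP[/negbTE -> ->].
Qed.

Lemma mem_Cs m (K : {set {ffun 'I_m.+1 -> bool}}) (pi : {perm 'I_m.+1}) s y :
  y \in Cs K pi s -> forall k, (k < s)%N ->
  y (pi (inord k)) = gbit K (Cs K pi k) (pi (inord k)).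
Proof.
elim: s => [//|s IH] /= /mem_next [hy hb] k.
rewrite ltnS leq_eqVlt => /orP[/eqP -> //|hk].
exact: IH.
Qed.

Lemma card_next m (K : {set {ffun 'I_m.+1 -> bool}}) S (j : 'I_m.+1) :
  (#|K :&: S| <= 2 * #|K :&: nextS K S j|)%N.
Proof.
rewrite -(cardsID (bset j) (K :&: S)) /nextS /gbit.
case: ifP => h.
  by rewrite setIA mul2n -addnn leq_add2l.
rewrite setIDA mul2n -addnn leq_add2r; apply: ltnW; rewrite ltnNge h.
by [].
Qed.

Lemma card_Cs m (K : {set {ffun 'I_m.+1 -> bool}}) (pi : {perm 'I_m.+1}) s :
  (#|K| <= 2 ^ s * #|K :&: Cs K pi s|)%N.
Proof.
elim: s => [|s IH] /=; first by rewrite setIT expn0 mul1n.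
apply: (leq_trans IH); rewrite expnS -mulnA mulnCA leq_mul2l; apply/orP; right.
exact: card_next.
Qed.

Lemma clue_in_K m (K : {set {ffun 'I_m.+1 -> bool}}) :
  (2 ^ m < #|K|)%N -> forall pi z, clue (Fbob K) pi z \in K.
Proof.
move=> hK pi z; apply/negPn/negP => hz.
set D := Cs K pi m.
have h2 : (1 < #|K :&: D|)%N.
  rewrite ltnNge; apply/negP => h1.
  have := card_Cs K pi m; rewrite -/D => h.
  have : (#|K| <= 2 ^ m)%N.
    apply: (leq_trans h); rewrite -[X in (_ <= X)%N]muln1 leq_mul2l h1 orbT //.
  by rewrite leqNgt hK.
have hsub : K :&: D \subset [set clue (Fbob K) pi (~~ z)].
  apply/subsetP => y; rewrite inE => /andP[yK yD].
  have ey : y = clue (Fbob K) pi (y (pi ord_max)).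
    apply/ffunP => j; rewrite ffunE /=.
    case: ifP => hk; last first.
      have ek : (pi^-1)%g j = ord_max.
        apply: val_inj => /=; apply/eqP; rewrite eqn_leq -ltnS ltn_ord leqNgt hk.
        by [].
      by rewrite -{1}(permKV pi j) ek.
    rewrite /Fbob /=; have := mem_Cs yD hk; rewrite !inord_val !permKV => ->.
    by [].
  rewrite inE ey; case: (y (pi ord_max)) ey => ey; case: z hz => hz //=;
    by move: hz; rewrite -ey yK.
have := subset_leq_card hsub; rewrite cards1 => h.
by move: (leq_ltn_trans h h2); rewrite ltnn.
Qed.

Lemma tree_same n (T : dtree n) (b0 b1 : {ffun 'I_n -> bool}) j :
  (forall i, i != j -> b0 i = b1 i) -> j \notin queried T b0 ->
  queried T b1 = queried T b0 /\ eval T b1 = eval T b0.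
Proof.
move=> H; elim: T => [o|i T0 IH0 T1 IH1] //=.
rewrite inE negb_or => /andP[ji hq].
have -> : b1 i = b0 i by rewrite H // eq_sym.
case: (b0 i) hq => hq.
  by have [-> ->] := IH1 hq.
by have [-> ->] := IH0 hq.
Qed.

Lemma parity_flip n (b0 b1 : {ffun 'I_n -> bool}) j :
  (forall i, i != j -> b0 i = b1 i) -> b1 j = ~~ b0 j ->
  parity b1 = ~~ parity b0.
Proof.
move=> H hj; rewrite /parity (bigD1 j) //= [in RHS](bigD1 j) //= hj addNb.
congr (~~ (_ (+) _)); apply: eq_bigr => i hi; by rewrite H.
Qed.

Lemma tree_ineq n (T : dtree n) (b0 b1 : {ffun 'I_n -> bool}) j :
  (forall i, i != j -> b0 i = b1 i) -> b1 j = ~~ b0 j ->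
  (2 * ((eval T b0 == parity b0) + (eval T b1 == parity b1))
     <= 2 + (j \in queried T b0) + (j \in queried T b1))%N.
Proof.
move=> H hj.
have H' : forall i, i != j -> b1 i = b0 i by move=> i hi; rewrite H.
have hj' : b0 j = ~~ b1 j by rewrite hj negbK.
have hp := parity_flip H hj.
case h0: (j \in queried T b0).
  case h1: (j \in queried T b1).
    by case: (eval T b0 == _); case: (eval T b1 == _).
  have [hq he] := tree_same H' (negbT h1).
  by move: h0; rewrite hq h1.
have [hq he] := tree_same H (negbT h0).
rewrite hq h0 he hp.
by case: (eval T b0); case: (parity b0).
Qed.

Lemma sum_ineq (F : realFieldType) n (A : seq (dtree n * F)) (f g : dtree n -> F) :
  all (fun p => 0 <= p.2) A -> (forall T, f T <= g T) ->
  \sum_(p <- A) p.2 * f p.1 <= \sum_(p <- A) p.2 * g p.1.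
Proof.
move=> hA hfg; elim: A hA => [|p A IH] /=; first by rewrite !big_nil.
move=> /andP[hp hA]; rewrite !big_cons; apply: lerD; last exact: IH.
exact: ler_wpM2l.
Qed.

Lemma ss_eq m (T : dtree m.+1) (pi : {perm 'I_m.+1}) b :
  search_success T pi b = (pi ord_max \in queried T b).
Proof.
apply/existsP/idP => [[k /andP[/eqP hk hq]]|h].
  by have <- : k = ord_max by apply: val_inj.
by exists ord_max; rewrite /= eqxx h.
Qed.

Lemma clue_other m (Fb : nat -> {perm 'I_m.+1} -> bool) (pi : {perm 'I_m.+1}) i :
  i != pi ord_max -> clue Fb pi false i = clue Fb pi true i.
Proof.
move=> hi; rewrite !ffunE /=; case: ifP => // hk.
have ek : (pi^-1)%g i = ord_max.
  apply: val_inj => /=; apply/eqP; rewrite eqn_leq -ltnS ltn_ord leqNgt hk.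
  by [].
by move: hi; rewrite -{1}(permKV pi i) ek eqxx.
Qed.

Lemma clue_last m (Fb : nat -> {perm 'I_m.+1} -> bool) (pi : {perm 'I_m.+1}) z :
  clue Fb pi z (pi ord_max) = z.
Proof. by rewrite ffunE /= permK /= ltnn. Qed.

Theorem theorem2 (F : realFieldType) (n t : nat) (A : seq (dtree n * F))
  (K : {set {ffun 'I_n -> bool}}) :
  (1 < n)%N -> (0 < t <= n)%N ->
  rand_alg t A ->
  (2 ^ n.-1 < #|K|)%N ->
  (forall y, y \in K -> 2%:R / 3%:R <= prob_correct A y) ->
  exists Fb : nat -> {perm 'I_n} -> bool,
    bob_strategy Fb /\ 1 / 3%:R <= prob_search A Fb.
Proof.
case: n A K => [|m] A K hn; first by [].
move=> _ [_ hw hsum] hK hcorr.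
exists (Fbob K); split.
  move=> t' pi sigma /andP[ht1 ht2] H; rewrite /Fbob.
  have hlt : (t'.-1 < m.+1)%N by apply: (leq_ltn_trans (leq_pred t')); rewrite ltnS.
  rewrite (Cs_dep K (sigma := sigma)); first last.
  - by move=> k hk; apply: H; apply: (leq_trans hk); apply: leq_pred.
  - exact: ltnW.
  rewrite H // [val _]inordK //.
  by case: t' ht1 {ht2 H hlt}.
have key : forall pi : {perm 'I_m.+1}, 2 / 3 <= \sum_(z : bool) \sum_(p <- A)
    p.2 * (search_success p.1 pi (clue (Fbob K) pi z))%:R.
  move=> pi; rewrite big_bool /=.
  set b0 := clue (Fbob K) pi false; set b1 := clue (Fbob K) pi true.
  have H : forall i, i != pi ord_max -> b0 i = b1 i by move=> i; apply: clue_other.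
  have hj : b1 (pi ord_max) = ~~ b0 (pi ord_max) by rewrite !clue_last.
  have c0 := hcorr b0 (clue_in_K hK pi false).
  have c1 := hcorr b1 (clue_in_K hK pi true).
  have ineq := sum_ineq
    (f := fun T => 2 * ((eval T b0 == parity b0)%:R + (eval T b1 == parity b1)%:R))
    (g := fun T => 2 + (search_success T pi b0)%:R + (search_success T pi b1)%:R) hw.
  have e1 : \sum_(p <- A) p.2 * (2 * ((eval p.1 b0 == parity b0)%:R + (eval p.1 b1 == parity b1)%:R))
     = 2 * (prob_correct A b0 + prob_correct A b1).
    rewrite /prob_correct mulrDr !mulr_sumr -big_split; apply: eq_bigr => p _ /=; ring.
  have e2 : \sum_(p <- A) p.2 * (2 + (search_success p.1 pi b0)%:R + (search_success p.1 pi b1)%:R)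
     = 2 * \sum_(p <- A) p.2 + \sum_(p <- A) p.2 * (search_success p.1 pi b0)%:R
       + \sum_(p <- A) p.2 * (search_success p.1 pi b1)%:R.
    rewrite mulr_sumr -!big_split; apply: eq_bigr => p _ /=; ring.
  have : 2 * (prob_correct A b0 + prob_correct A b1) <=
     2 * \sum_(p <- A) p.2 + \sum_(p <- A) p.2 * (search_success p.1 pi b0)%:R
       + \sum_(p <- A) p.2 * (search_success p.1 pi b1)%:R.
    rewrite -e1 -e2; apply: ineq => T.
    have := tree_ineq T H hj; rewrite -(ler_nat F) natrM !natrD !ss_eq.
    by [].
  rewrite hsum; move: c0 c1; lra.
have hS : \sum_(pi : {perm 'I_m.+1}) (2 / 3 : F) <= \sum_(pi : {perm 'I_m.+1}) \sum_(z : bool) \sum_(p <- A)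
    p.2 * (search_success p.1 pi (clue (Fbob K) pi z))%:R.
  by apply: ler_sum => pi _; apply: key.
rewrite sumr_const -mulr_natr in hS.
rewrite /prob_search.
have hN : (0 < #|{perm 'I_m.+1}|)%N by apply/card_gt0P; exists 1%g.
have hN' : (0 : F) < (#|{perm 'I_m.+1}|)%:R by rewrite ltr0n.
set N := (#|{perm 'I_m.+1}|)%:R in hN' hS *.
set S := \sum_(pi : {perm 'I_m.+1}) _ in hS *.
have hpos : 0 <= 1 / (2 * N) by rewrite divr_ge0 // mulr_ge0 // ltW.
apply: le_trans (ler_wpM2l hpos hS).
rewrite le_eqVlt; apply/orP; left; apply/eqP; field.
by rewrite gt_eqF.
Qed.
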